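(* For every $m\ge 2$ and $n\ge 2$, the $m$th order $n$-dimensional Pascal tensor is strongly completely positive.
   Context: The $m$th order $n$-dimensional Pascal tensor is $\mathcal{P}=(p_{i_1\dots i_m})$ with $p_{i_1\dots i_m}=\frac{(i_1+\dots+i_m-m)!}{(i_1-1)!\cdots(i_m-1)!}$ for $i_1,\dots,i_m\in\{1,\dots,n\}$ (for $m=2$ this is the symmetric Pascal matrix). For $\mathbf{u}\in\mathbb{R}^n$, $\mathbf{u}^m$ is the tensor with entries $u_{i_1}\cdots u_{i_m}$. A symmetric tensor $\mathcal{A}$ of order $m$ and dimension $n$ is strongly completely positive if there are nonnegative vectors $\mathbf{u}^{(1)},\dots,\mathbf{u}^{(r)}\in\mathbb{R}^n$ spanning $\mathbb{R}^n$ such that $\mathcal{A}=(\mathbf{u}^{(1)})^m+\dots+(\mathbf{u}^{(r)})^m$. *)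

(* Defs.v *)
From mathcomp Require Import all_boot all_order all_fingroup all_algebra.
From mathcomp Require Import reals.
Set Implicit Arguments. Unset Strict Implicit. Unset Printing Implicit Defensive.
Import Order.TTheory GRing.Theory Num.Theory.
Local Open Scope ring_scope.

(* Indices are
   0-based: the paper's index i_k corresponds to (idx k).+1. *)
Definition tensor (R : Type) (m n : nat) := ({ffun 'I_m -> 'I_n} -> R).

(* Pascal tensor: p_{i_1..i_m} = (i_1+...+i_m-m)! / ((i_1-1)! ... (i_m-1)!),
   in 0-based indices (sum_k j_k)! / prod_k (j_k)!. *)
Definition pascal_tensor (R : realType) (m n : nat) : tensor R m n :=
  fun idx => ((\sum_(k < m) (idx k : nat))`!)%:R /
             (\prod_(k < m) ((idx k : nat)`!)%:R).
Arguments pascal_tensor R m n : clear implicits.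

Definition tpow (R : realType) (m n : nat) (u : 'rV[R]_n) : tensor R m n :=
  fun idx => \prod_(k < m) u 0 (idx k).
Arguments tpow R m n u : clear implicits.

Definition symmetric_tensor (R : realType) (m n : nat) (A : tensor R m n) :=
  forall (s : 'S_m) (idx : {ffun 'I_m -> 'I_n}),
    A [ffun k => idx (s k)] = A idx.

Definition strongly_completely_positive (R : realType) (m n : nat)
    (A : tensor R m n) : Prop :=
  symmetric_tensor A /\
  exists (r : nat) (U : 'M[R]_(r, n)),
    (forall k j, 0 <= U k j) /\
    (\rank U = n)%N /\
    (forall idx, A idx = \sum_(k < r) tpow R m n (row k U) idx).
Arguments strongly_completely_positive R m n A : clear implicits.

(* Main.v *)
Require Import Defs.
From mathcomp Require Import all_boot all_order all_fingroup all_algebra.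
From mathcomp Require Import reals.
From mathcomp Require Import polyrcf complex.
From mathcomp Require Import zify ring lra.
Set Implicit Arguments. Unset Strict Implicit. Unset Printing Implicit Defensive.
Import Order.TTheory GRing.Theory Num.Theory.

(* We build a
   Gauss quadrature (positive weights w_i, distinct positive nodes z_i) for the
   functional Lf(X^s) = s! using the Laguerre polynomial (real-rootedness via
   the complex numbers and positive definiteness of Lf), then take
   U_{i,j} = w_i^(1/m) z_i^j / j!. *)


Lemma fact_gram (a b K : nat) : (a < K)%N -> (b < K)%N ->
  (a + b)`! = (a`! * b`! * \sum_(l < K) 'C(a, l) * 'C(b, l))%N.
Proof.
move=> aK bK.
have V := binomial.Vandermonde a b a.
rewrite (reindex_inj rev_ord_inj) /= in V.
have E1 : (\sum_(j < a.+1) 'C(a, j) * 'C(b, j) = 'C(a + b, a))%N.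
  rewrite -V; apply: eq_bigr => [[j /= ja]] _.
  have jl : (j <= a)%N by rewrite -ltnS.
  by rewrite subSS subKn // bin_sub.
have -> : (\sum_(l < K) 'C(a, l) * 'C(b, l) = 'C(a + b, a))%N.
  rewrite -E1 [RHS](big_ord_widen K (fun j => 'C(a, j) * 'C(b, j)))%N //.
  rewrite [RHS]big_mkcond /=; apply: eq_bigr => j _.
  by case: ltnP => // ja; rewrite bin_small.

by rewrite -(bin_fact (leq_addr b a)) addKn mulnC.
Qed.


Section Alt.
Variable R : realType.
Local Open Scope ring_scope.

Definition Aal (N i : nat) : R :=
  \sum_(k < N.+1) (-1) ^+ k * ('C(N, k))%:R * ('C(k + i, i))%:R.
Definition Ual (N i : nat) : R :=
  \sum_(k < N.+1) (-1) ^+ k * ('C(N, k))%:R * ('C(k.+1 + i, i))%:R.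

Lemma Aal_0 N : Aal N.+1 0 = 0.
Proof.
rewrite /Aal; transitivity ((1 + -1 : R) ^+ N.+1); last by rewrite subrr expr0n.
rewrite exprDn; apply: eq_bigr => k _.
by rewrite bin0 mulr1 expr1n mul1r mulr_natr.
Qed.

Lemma Aal_rec N i : Aal N.+1 i = Aal N i - Ual N i.
Proof.
have E1 : Aal N i = 1 + \sum_(k < N.+1)
     (-1) ^+ k.+1 * ('C(N, k.+1))%:R * ('C(k.+1 + i, i))%:R.
  rewrite /Aal big_ord_recl /= expr0 bin0 add0n binn !mul1r.
  congr (_ + _); rewrite [RHS]big_ord_recr /= bin_small // mulr0 mul0r addr0.
  by apply: eq_bigr => k _.
rewrite /Aal big_ord_recl /= expr0 bin0 add0n binn !mul1r.
rewrite -/(Aal N i) E1 -addrA; congr (_ + _).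
rewrite /Ual -sumrN -big_split /=; apply: eq_bigr => k _.
rewrite binS natrD exprS; ring.
Qed.

Lemma Ual_rec N i : Ual N i.+1 = Aal N i.+1 + Ual N i.
Proof.
rewrite /Ual /Aal -big_split /=; apply: eq_bigr => k _.
rewrite addnS binS natrD addSn -addnS; ring.
Qed.

Lemma Ual_0 N : Ual N 0 = Aal N 0.
Proof. by apply: eq_bigr => k _; rewrite !bin0. Qed.

Lemma Aal_eq0 N i : (i < N)%N -> Aal N i = 0.
Proof.
elim: N i => [//|N IH] i H.
have U0 : forall j, (j < N)%N -> Ual N j = 0.
  elim=> [|j IHj] jN; first by rewrite Ual_0 IH.
  by rewrite Ual_rec IH // IHj ?add0r // ltnW.
rewrite Aal_rec.
move: H; rewrite ltnS leq_eqVlt => /orP[/eqP ->|iN]; last by rewrite IH ?U0 ?subrr.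
case: N IH U0 => [|N] IH U0; first by rewrite Ual_0 subrr.
by rewrite Ual_rec opprD addrA subrr add0r U0 ?oppr0.
Qed.
End Alt.


Section Quad.
Variable R : realType.
Local Open Scope ring_scope.
Implicit Types f g h : {poly R}.

Definition Lf f : R := \sum_(i < size f) f`_i * (i`!)%:R.

Lemma Lf_widen k f : (size f <= k)%N -> Lf f = \sum_(i < k) f`_i * (i`!)%:R.
Proof.
move=> sk; rewrite /Lf (big_ord_widen k (fun i => f`_i * (i`!)%:R)) // big_mkcond.
apply: eq_bigr => i _; case: ltnP => // /(nth_default 0) ->; by rewrite mul0r.
Qed.

Lemma LfD f g : Lf (f + g) = Lf f + Lf g.
Proof.
pose k := maxn (size f) (size g).
rewrite (@Lf_widen k f) ?leq_maxl // (@Lf_widen k g) ?leq_maxr //.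
rewrite (@Lf_widen k) ?size_polyD // -big_split /=.
by apply: eq_bigr => i _; rewrite coefD mulrDl.
Qed.

Lemma LfZ c f : Lf (c *: f) = c * Lf f.
Proof.
rewrite (@Lf_widen (size f)) ?size_scale_leq // /Lf mulr_sumr.
by apply: eq_bigr => i _; rewrite coefZ mulrA.
Qed.

Lemma Lf0 : Lf 0 = 0.
Proof. by rewrite /Lf size_poly0 big_ord0. Qed.

Lemma Lf_sum (I : Type) (r : seq I) (P : pred I) (F : I -> {poly R}) :
  Lf (\sum_(i <- r | P i) F i) = \sum_(i <- r | P i) Lf (F i).
Proof. exact: (big_morph Lf LfD Lf0). Qed.

Lemma LfXn k : Lf 'X^k = (k`!)%:R.
Proof.
rewrite /Lf size_polyXn big_ord_recr /= big1 ?add0r.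
  by rewrite coefXn eqxx mul1r.
by move=> [i /= ik] _; rewrite coefXn ltn_eqF // mul0r.
Qed.

Lemma LfM f g : Lf (f * g) =
  \sum_(a < size f) \sum_(b < size g) f`_a * g`_b * ((a + b)`!)%:R.
Proof.
have -> : f * g = (\poly_(i < size f) f`_i) * (\poly_(i < size g) g`_i) by rewrite !coefK.
rewrite !poly_def mulr_suml Lf_sum.
apply: eq_bigr => a _; rewrite mulr_sumr Lf_sum; apply: eq_bigr => b _.
by rewrite -scalerAl -scalerAr scalerA -exprD LfZ LfXn.
Qed.

Lemma Lf_sq_gt0 h : h != 0 -> 0 < Lf (h * h).
Proof.
move=> h0; rewrite LfM.
set K := size h.
have KE : K = (K.-1).+1 by rewrite prednK // lt0n size_poly_eq0.
pose S (l : 'I_K) := \sum_(a < K) h`_a * (a`!)%:R * ('C(a, l))%:R.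
have -> : \sum_(a < K) \sum_(b < K) h`_a * h`_b * ((a + b)`!)%:R =
          \sum_(l < K) S l * S l.
  symmetry; rewrite /S; under eq_bigr => l _ do rewrite mulr_suml.
  rewrite exchange_big /=; apply: eq_bigr => a _.
  under eq_bigr => l _ do rewrite mulr_sumr.
  rewrite exchange_big /=; apply: eq_bigr => b _.
  rewrite (fact_gram (ltn_ord a) (ltn_ord b)) !natrM natr_sum mulr_sumr.
  rewrite mulr_sumr; apply: eq_bigr => l _; rewrite natrM; ring.
have lK : (K.-1 < K)%N by rewrite {2}KE.
rewrite (bigD1 (Ordinal lK)) //=.
have B : 0 <= \sum_(i < K | i != Ordinal lK) S i * S i.
  by apply: sumr_ge0 => l _; rewrite -expr2; exact: sqr_ge0.
suff A : 0 < S (Ordinal lK) * S (Ordinal lK) by lra.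
  have -> : S (Ordinal lK) = h`_(K.-1) * ((K.-1)`!)%:R.
    rewrite /S (bigD1 (Ordinal lK)) //= big1 ?addr0 ?binn ?mulr1 //.
    move=> [a /= aK] ne; rewrite bin_small ?mulr0 //.
    have : (a != K.-1) by apply: contra ne => /eqP e; apply/eqP/val_inj.
    have aK' := aK; move: aK'; rewrite {1}KE ltnS leq_eqVlt => /orP[/eqP -> |//]; by rewrite eqxx.
  rewrite -expr2 exprn_even_gt0 //=; apply: mulf_neq0.
    by rewrite -lead_coef_eq0 in h0.
  by rewrite pnatr_eq0 -lt0n fact_gt0.
Qed.

End Quad.


Section Lag.
Variable R : realType.
Local Open Scope ring_scope.
Implicit Types f g h : {poly R}.

Definition lag N : {poly R} :=
  \poly_(k < N.+1) ((-1) ^+ k * ('C(N, k))%:R / ((k`!)%:R)).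

Lemma size_lag N : size (lag N) = N.+1.
Proof.
rewrite size_poly_eq //= binn mulr1 mulf_neq0 ?signr_eq0 //.
by rewrite invr_eq0 pnatr_eq0 -lt0n fact_gt0.
Qed.

Lemma lag_orthX N i : (i < N)%N -> Lf (lag N * 'X^i) = 0.
Proof.
move=> iN; rewrite LfM size_lag size_polyXn.
transitivity ((i`!)%:R * Aal R N i); last by rewrite Aal_eq0 ?mulr0.
rewrite /Aal mulr_sumr; apply: eq_bigr => a _.
rewrite big_ord_recr /= big1 ?add0r; last first.
  by move=> [b /= bi] _; rewrite coefXn ltn_eqF // mulr0 mul0r.
rewrite coefXn eqxx mulr1 coef_poly ltn_ord.
rewrite -(bin_fact (leq_addl a i)) addnK !natrM.
have fa : (a`!)%:R != 0 :> R by rewrite pnatr_eq0 -lt0n fact_gt0.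
by rewrite addnC; field.
Qed.

Lemma lag_orth N g : (size g <= N)%N -> Lf (lag N * g) = 0.
Proof.
move=> sg; rewrite -[g]coefK poly_def mulr_sumr Lf_sum big1 // => i _.
rewrite -scalerAr LfZ lag_orthX ?mulr0 //.
exact: leq_trans (ltn_ord i) sg.
Qed.

Lemma lag_pos N x : x <= 0 -> 0 < (lag N).[x].
Proof.
move=> x0; rewrite horner_poly big_ord_recl /= expr0 bin0 !mul1r invr1 mulr1.
have : 0 <= \sum_(i < N) (-1) ^+ (bump 0 i) * ('C(N, bump 0 i))%:R /
          (((bump 0 i)`!)%:R) * x ^+ (bump 0 i).
  apply: sumr_ge0 => i _.
  rewrite mulrAC [_ * x ^+ _]mulrC mulrA -exprMn mulrN1.
  apply: divr_ge0; last exact: ler0n.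
  apply: mulr_ge0; last exact: ler0n.
  by apply: exprn_ge0; rewrite oppr_ge0.
lra.
Qed.
End Lag.


Lemma not_uniq_rem (T : eqType) (r : seq T) : ~~ uniq r -> exists z, z \in rem z r.
Proof.
elim: r => [//|x s IH] /=; rewrite negb_and negbK => /orP[xs|/IH [z zs]].
  by exists x; rewrite eqxx.
exists z; rewrite /=; case: eqP => [E|_]; first exact: mem_rem zs.
exact: (@mem_behead _ (x :: rem z s)).
Qed.

Section RR.
Variable R : realType.
Local Open Scope ring_scope.
Local Open Scope complex_scope.
Implicit Types f g h : {poly R}.

Let C := R[i].
Let toC := real_complex R.

Lemma quad_contra (p : {poly R}) N : size p = N.+1 ->
  (forall g, (size g <= N)%N -> Lf (p * g) = 0) ->
  forall a b : R, ('X - a%:P) ^+ 2 + (b ^+ 2)%:P %| p -> False.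
Proof.
move=> sp orth a b.
set q := _ + _ => qp.
have p0 : p != 0 by rewrite -size_poly_eq0 sp.
have sq : size q = 3.
  rewrite /q size_addl; first by rewrite size_exp_XsubC.
  by rewrite size_exp_XsubC (leq_ltn_trans (size_polyC_leq1 _)).
have pE : p = p %/ q * q by apply/eqP; rewrite -dvdp_eq.
set g := p %/ q in pE.
have g0 : g != 0 by apply: contra p0 => /eqP g0; rewrite pE g0 mul0r.
have q0 : q != 0 by rewrite -size_poly_eq0 sq.
have sg : (size g <= N)%N.
  have := sp; rewrite pE size_mul // sq addn3 /= => [[<-]]; exact: leqnSn.
have := orth g sg.
have -> : p * g = (('X - a%:P) * g) * (('X - a%:P) * g) + (b ^+ 2) *: (g * g).
  by rewrite pE /q -mul_polyC; ring.
rewrite LfD LfZ.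
have h0 : ('X - a%:P) * g != 0 by rewrite mulf_neq0 ?polyXsubC_eq0.
have := Lf_sq_gt0 h0; have := Lf_sq_gt0 g0.
have := sqr_ge0 b.
nra.
Qed.

End RR.

Lemma mem_rem_neq (T : eqType) (x y : T) (s : seq T) :
  y != x -> y \in s -> y \in rem x s.
Proof.
move=> yx; elim: s => [//|u s IH]; rewrite in_cons /= => /orP[/eqP <-|ys].
  by rewrite (negPf yx) mem_head.
case: eqP => _ //; exact: (@mem_behead _ (u :: rem x s)) (IH ys).
Qed.

Section RR2.
Variable R : realType.
Local Open Scope ring_scope.

Lemma orth_real_roots (p : {poly R}) N : size p = N.+1 ->
  (forall g : {poly R}, (size g <= N)%N -> Lf (p * g) = 0) ->
  exists s : seq R, [/\ size s = N, uniq s & all (root p) s].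
Proof.
move=> sp orth.
pose toC := real_complex R.
pose pC := map_poly toC p.
have [r Hr] := closed_field_poly_normal pC.
have spC : size pC = N.+1 by rewrite size_map_poly.
have lc0 : lead_coef pC != 0 by rewrite lead_coef_eq0 -size_poly_eq0 spC.
have szr : size r = N.
  by have := spC; rewrite Hr size_scale // size_prod_XsubC => [[]].
have rootsr z : root pC z = (z \in r) by rewrite Hr rootZ // root_prod_XsubC.
have conjroot z : root pC z -> root pC (conjc z).
  rewrite -complex_root_conj; congr (root _ _); apply/polyP => i.
  by rewrite !coef_map /= oppr0.
have noquad z : z \in r -> conjc z \in rem z r -> False.
  move=> zr zr'.
  have dv : ('X - z%:P) * ('X - (conjc z)%:P) %| pC.
    rewrite Hr dvdpZr // (perm_big _ (perm_to_rem zr)) big_cons.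
    rewrite (perm_big _ (perm_to_rem zr')) big_cons /= mulrA.
    exact: dvdp_mulIl.
  apply: (@quad_contra R p N sp orth (@complex.Re R z) (@complex.Im R z)).
  rewrite -(dvdp_map toC); apply: dvdp_trans dv.
  have E : ('X - z%:P) * ('X - (conjc z)%:P) =
      'X^2 - (z + conjc z)%:P * 'X + (z * conjc z)%:P.
    by rewrite polyCD polyCM; ring.
  rewrite E addcJ -sqr_normc -add_Re2_Im2.
  rewrite rmorphD rmorphXn rmorphB /= map_polyX !map_polyC /= rmorphXn /=.
  set A := (complex.Re z)%:C%C; set B := (complex.Im z)%:C%C.
  rewrite rmorphD !rmorphXn /= -/A -/B polyCD polyCM !polyC_exp polyC_natr.
  rewrite [X in _ %| X](_ : _ = ('X - A%:P) ^+ 2 + B%:P ^+ 2) ?dvdpp //; ring.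
have real z : z \in r -> complex.Im z = 0.
  move=> zr; apply/eqP; apply/negPn/negP => Iz.
  apply: (noquad z zr); apply: mem_rem_neq.
    case: z Iz {zr} => a b /= Iz; apply/negP => /eqP [] E.
    have b0 : b = 0 by lra.
    by rewrite b0 eqxx in Iz.
  by rewrite -rootsr; apply: conjroot; rewrite rootsr.
have ur : uniq r.
  apply/negPn/negP => /not_uniq_rem [z zr'].
  have zr := mem_rem zr'.
  apply: (noquad z zr).
  have Iz := real _ zr.
  suff -> : conjc z = z by [].
  by case: z Iz {zr zr'} => a b /= ->; rewrite oppr0.
exists (map (@complex.Re R) r); split.
- by rewrite size_map.
- rewrite map_inj_in_uniq // => [[a b] [c d]] ab cd /= ac.
  by move: (real _ ab) (real _ cd) => /= -> ->; rewrite ac.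
- apply/allP => x /mapP [[a b] zr ->] /=.
  have := real _ zr; rewrite /= => b0; subst b.
  have : root pC (a +i* 0)%C by rewrite rootsr.
  by rewrite /root -[(a +i* 0)%C]/(toC a) horner_map /= fmorph_eq0.
Qed.
End RR2.


Section Q.
Variable R : realType.
Local Open Scope ring_scope.

Lemma gauss N : (0 < N)%N -> exists (z w : 'I_N -> R),
  [/\ injective z, (forall i, 0 < z i), (forall i, 0 < w i) &
   (forall f : {poly R}, (size f <= N.*2)%N -> Lf f = \sum_i w i * f.[z i])].
Proof.
move=> N0.
have sp := size_lag R N.
have [s [sz us rs]] := orth_real_roots sp (@lag_orth R N).
pose z (i : 'I_N) := nth 0 s i.
have zinj : injective z.
  move=> i j /eqP; rewrite /z nth_uniq ?sz // => /eqP; exact: val_inj.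
have zroot i : root (lag R N) (z i) by apply: (allP rs); rewrite mem_nth ?sz.
have zpos i : 0 < z i.
  rewrite ltNge; apply/negP => /(lag_pos N); move/rootP: (zroot i) => ->.
  by rewrite ltxx.
pose c i := (\prod_(j < N | j != i) (z i - z j))^-1.
pose l i := c i *: \prod_(j < N | j != i) ('X - (z j)%:P).
have lval i k : (l i).[z k] = (i == k)%:R.
  rewrite hornerZ horner_prod.
  under eq_bigr => j _ do rewrite hornerXsubC.
  case: eqP => [<-|/eqP ik].
    rewrite mulVf //; apply/prodf_neq0 => j ji; by rewrite subr_eq0 (inj_eq zinj) eq_sym.
  by rewrite (bigD1 k) 1?eq_sym //= subrr mul0r mulr0.
have sl i : (size (l i) <= N)%N.
  apply: leq_trans (size_scale_leq _ _) _.
  rewrite (eq_bigl (fun j => j \in predC1 i)) // -big_enum size_prod_XsubC.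
  by rewrite -cardE cardC1 card_ord; case: (N) N0.
have interp (r : {poly R}) : (size r <= N)%N -> r = \sum_i r.[z i] *: l i.
  move=> sr; apply/eqP; rewrite -subr_eq0; apply/eqP.
  apply: (@roots_geq_poly_eq0 _ _ s).
  - apply/allP => x xs; have /(nthP 0) [k ks <-] := xs.
    rewrite sz in ks; rewrite -[nth 0 s k]/(z (Ordinal ks)).
    rewrite /root hornerD hornerN horner_sum.
    rewrite (bigD1 (Ordinal ks)) //= big1 ?addr0 => [|j /negPf jk];
      rewrite hornerZ lval ?eqxx ?mulr1 ?subrr //.
    by rewrite jk mulr0.
  - exact: us.
  - rewrite sz; apply: leq_trans (size_polyD _ _) _; rewrite geq_max sr /=.
    rewrite size_polyN; apply: leq_trans (size_sum _ _ _) _.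
    apply/bigmax_leqP => i _; exact: leq_trans (size_scale_leq _ _) (sl i).
pose w i := Lf (l i).
have exact (f : {poly R}) : (size f <= N.*2)%N -> Lf f = \sum_i w i * f.[z i].
  move=> sf.
  have p0 : lag R N != 0 by rewrite -size_poly_eq0 sp.
  rewrite [f in LHS](divp_eq f (lag R N)) LfD mulrC lag_orth ?add0r; last first.
    by rewrite size_divp // sp /= leq_subLR addnn.
  rewrite [_ %% _ in LHS]interp; last by rewrite -ltnS -sp ltn_modp.
  rewrite Lf_sum; apply: eq_bigr => i _; rewrite LfZ mulrC.
  congr (_ * _); rewrite [f in RHS](divp_eq f (lag R N)) hornerD hornerM.
  by move/rootP: (zroot i) => ->; rewrite mulr0 add0r.
exists z, w; split => // i.
have -> : w i = Lf (l i * l i).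
  rewrite exact; last first.
    apply: leq_trans (size_mul_leq _ _) _.
    rewrite -addnn; have := sl i; case: (size (l i)) => //= k kN.
    by rewrite leq_add // ltnW.
  rewrite (bigD1 i) //= big1 ?addr0; last first.
    by move=> j ji; rewrite hornerM lval eq_sym (negPf ji) mulr0 mulr0.
  by rewrite hornerM lval eqxx mulr1 mulr1.
apply: Lf_sq_gt0; apply/eqP => l0.
by have := lval i i; rewrite l0 horner0 eqxx => /esym/eqP; rewrite oner_eq0.
Qed.
End Q.

Local Open Scope ring_scope.

Theorem theorem3p1 (R : realType) (m n : nat) :
  (2 <= m)%N -> (2 <= n)%N ->
  strongly_completely_positive R m n (pascal_tensor R m n).
Proof.
move=> m2 n2; split.
  move=> s idx; rewrite /pascal_tensor.
  have E1 : (\sum_(k < m) ([ffun k => idx (s k)] k : nat) = \sum_(k < m) (idx k : nat))%N.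
    under eq_bigr => k _ do rewrite ffunE.
    by rewrite [RHS](reindex_inj (@perm_inj _ s)).
  have E2 : \prod_(k < m) ((([ffun k => idx (s k)] k : nat))`!)%:R =
            \prod_(k < m) (((idx k : nat))`!)%:R :> R.
    under eq_bigr => k _ do rewrite ffunE.
    by rewrite [RHS](reindex_inj (@perm_inj _ s)).
  by rewrite E1 E2.
have N0 : (0 < m * n)%N by rewrite muln_gt0; apply/andP; split; [apply: leq_trans m2|apply: leq_trans n2].
have [z [w [zinj zpos wpos exact]]] := gauss R N0.
have mE : m = m.-1.+1 by rewrite prednK // (leq_trans _ m2).
pose c i := s2val (nth_root m.-1 (wpos i)).
have cpos i : 0 < c i by rewrite /c; case: (nth_root _ _).
have cexp i : c i ^+ m = w i by rewrite /c; case: (nth_root _ _) => /= y _; rewrite -mE.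
pose U := \matrix_(i < m * n, j < n) (c i * z i ^+ j / ((j`!)%:R)).
exists (m * n)%N, U; split; [|split].
- move=> i j; rewrite mxE; apply: divr_ge0; last exact: ler0n.
  by apply: mulr_ge0; [exact: ltW|apply: exprn_ge0; exact: ltW].
- rewrite -mxrank_tr; apply/eqP; apply: inj_row_free => v vU.
  pose P := \sum_(j < n) (v 0 j / ((j`!)%:R)) *: ('X^j : {poly R}).
  have Proot i : P.[z i] = 0.
    have := congr1 (fun M : 'M[R]_(1, m * n) => M 0 i) vU; rewrite !mxE => E.
    have : c i * P.[z i] = 0.
      rewrite -{}E horner_sum mulr_sumr; apply: eq_bigr => j _.
      rewrite hornerZ hornerXn.
      by rewrite !mxE; field; rewrite pnatr_eq0 -lt0n fact_gt0.
    by move/eqP; rewrite mulf_eq0 gt_eqF //= => /eqP.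
  have P0 : P = 0.
    apply: (@roots_geq_poly_eq0 _ _ (map z (enum 'I_(m * n)))).
    - by apply/allP => x /mapP [i _ ->]; apply/rootP.
    - by rewrite map_inj_uniq ?enum_uniq.
    - rewrite size_map size_enum_ord; apply: leq_trans (size_sum _ _ _) _.
      apply/bigmax_leqP => j _; apply: leq_trans (size_scale_leq _ _) _.
      rewrite size_polyXn; apply: leq_trans (ltn_ord j) _.
      by rewrite leq_pmull // (leq_trans _ m2).
  apply/rowP => j; have := congr1 (fun p : {poly R} => p`_j) P0.
  rewrite coef_sum coef0 (bigD1 j) //= big1 ?addr0; last first.
    move=> k kj; rewrite coefZ coefXn; move: kj; rewrite -val_eqE eq_sym => /negPf ->; by rewrite mulr0.
  rewrite coefZ coefXn eqxx mulr1 !mxE => /eqP; rewrite mulf_eq0 invr_eq0.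
  by rewrite pnatr_eq0 (negbTE (lt0n_neq0 (fact_gt0 j))) orbF => /eqP.
- move=> idx; rewrite /tpow.
  under eq_bigr => i _ do under eq_bigr => k _ do rewrite !mxE.
  set S := (\sum_(k < m) (idx k : nat))%N.
  have SN : (size ('X^S : {poly R}) <= (m * n).*2)%N.
    rewrite size_polyXn -addnn -addn1; apply: leq_add; last exact: N0.
    rewrite /S; apply: leq_trans (_ : \sum_(k < m) n <= _)%N.
      by apply: leq_sum => k _; exact: ltnW.
    by rewrite sum_nat_const card_ord.
  rewrite /pascal_tensor -/S -(LfXn R S) (exact _ SN) mulr_suml.
  apply: eq_bigr => i _.
  rewrite prodf_div big_split /= prodr_const card_ord cexp prodrXr -/S.
  by rewrite hornerXn.
Qed.
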